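(* Assume the standing conventions of the context. Let $\Psi=\binom{a_k}{b_l}$ be a consecutive pair in $Z_{\mathrm I}$ (so $l\in\{k-1,k\}$), and suppose $\mathcal D_{Z,Z'}\neq\emptyset$. Then $(\Lambda_\Psi,Z')\in\mathcal D_{Z,Z'}$ if and only if \[ \begin{cases} c_k\geq a_k\text{ and }b_k>d_k, & \text{if $m'=m$ and $l=k$};\\ a_k>c_k\text{ and }d_{k-1}\geq b_{k-1}, & \text{if $m'=m$ and $l=k-1$};\\ c_k>a_k\text{ and }b_k\geq d_k, & \text{if $m'=m+1$ and $l=k$};\\ a_k\geq c_k\text{ and }d_{k-1}>b_{k-1}, & \text{if $m'=m+1$ and $l=k-1$}. \end{cases} \]
   Context: A symbol is an array $\Lambda=\binom{a'_1,\ldots,a'_{m_1}}{b'_1,\ldots,b'_{m_2}}$ of two strictly decreasing finite sequences of nonnegative integers (top row, bottom row); its defect is $\mathrm{def}(\Lambda)=m_1-m_2$. Standing assumptions: $Z=\binom{a_1,\ldots,a_{m+1}}{b_1,\ldots,b_m}$ is a special symbol of defect $1$, i.e. $a_1\ge b_1\ge a_2\ge b_2\ge\cdots\ge b_m\ge a_{m+1}$; $Z'=\binom{c_1,\ldots,c_{m'}}{d_1,\ldots,d_{m'}}$ is a special symbol of defect $0$, i.e. $c_1\ge d_1\ge c_2\ge d_2\ge\cdots\ge c_{m'}\ge d_{m'}$; and $m'\in\{m,m+1\}$. For a symbol $Y$, $Y_{\mathrm I}$ is the set of entries of $Y$ occurring in exactly one row. For $M\subset Z_{\mathrm I}$, $\Lambda_M$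 is the symbol obtained from $Z$ by moving every entry of $M$ to the other row (rows re-sorted decreasingly); for $N\subset Z'_{\mathrm I}$, $\Lambda_N$ is obtained from $Z'$ in the same way. $\overline{\mathcal S}_Z=\{\Lambda_M: M\subset Z_{\mathrm I}\}$, $\overline{\mathcal S}_{Z'}=\{\Lambda_N:N\subset Z'_{\mathrm I}\}$; $\mathcal S_{Z,1}$ (resp. $\mathcal S_{Z',0}$) is the set of elements of $\overline{\mathcal S}_Z$ of defect $1$ (resp. of $\overline{\mathcal S}_{Z'}$ of defect $0$). A consecutive pair in $Z'_{\mathrm I}$ is a two-element subset $\{c_k,d_l\}\subset Z'_{\mathrm I}$, written $\binom{c_k}{d_l}$, with $l\in\{k-1,k\}$; a consecutive pair in $Z_{\mathrm I}$ is $\{a_k,b_l\}\subset Z_{\mathrm I}$, written $\binom{a_k}{b_l}$, with $l\in\{k-1,k\}$. Relation $\overline{\mathcal B}^+_{Z,Z'}\subset\overline{\mathcal S}_Z\times\overline{\mathcal S}_{Z'}$: for $\Lambda=\binom{a'_1,\ldots,a'_{m_1}}{b'_1,\ldots,b'_{m_2}}\in\overline{\mathcal S}_Z$ and $\Lambda'=\binom{c'_1,\ldots,c'_{m'_1}}{d'_1,\ldots,d'_{m'_2}}\in\overline{\mathcal S}_{Z'}$, $(\Lambda,\Lambda')\in\overline{\mathcal B}^+_{Z,Z'}$ iff $\mathrm{def}(\Lambda')=1-\mathrm{def}(\Lambda)$ and: if $m'=m$, $a'_i>d'_i\ge a'_{i+1}$ for $1\le i\le m'_2$ and $b'_{i-1}>c'_i\ge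 b'_i$ for $1\le i\le m'_1$; if $m'=m+1$, $a'_i\ge d'_i>a'_{i+1}$ for $1\le i\le m'_2$ and $b'_{i-1}\ge c'_i>b'_i$ for $1\le i\le m'_1$; here $b'_0=+\infty$ and nonexistent entries $a'_j,b'_j$ beyond the row lengths are $-\infty$. Then $\mathcal D_{Z,Z'}=\overline{\mathcal B}^+_{Z,Z'}\cap(\mathcal S_{Z,1}\times\mathcal S_{Z',0})$. *)

(* Defs.v *)
From mathcomp Require Import all_boot all_order all_algebra.
Set Implicit Arguments. Unset Strict Implicit. Unset Printing Implicit Defensive.

(* A symbol: (top row, bottom row), each a strictly decreasing seq of nats. *)
Definition symbol := (seq nat * seq nat)%type.

Definition strict_dec (s : seq nat) : bool := sorted (fun x y => y < x) s.
Definition is_symbol (L : symbol) : Prop := strict_dec L.1 /\ strict_dec L.2.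

Definition defect (L : symbol) : int := (Posz (size L.1) - Posz (size L.2))%R.

Inductive ext := NegInf | Fin of nat | PosInf.

Definition ext_le (x y : ext) : bool :=
  match x, y with
  | NegInf, _ => true
  | _, PosInf => true
  | Fin a, Fin b => a <= b
  | _, _ => false
  end.
Definition ext_lt (x y : ext) : bool := ~~ ext_le y x.

(* 1-based entry s_i; nonexistent entries (i = 0 or i > size s) are -oo *)
Definition ent (s : seq nat) (i : nat) : ext :=
  if (0 < i) && (i <= size s) then Fin (nth 0 s i.-1) else NegInf.
(* same, but with the convention s_0 = +oo (used for b'_0) *)
Definition entb (s : seq nat) (i : nat) : ext :=
  if i == 0 then PosInf else ent s i.

(* Z_I : entries occurring in exactly one row *)
Definition inI (L : symbol) (x : nat) : bool := (x \in L.1) != (x \in L.2).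

(* Lambda_M : move every entry of M to the other row, re-sort decreasingly *)
Definition moveM (L : symbol) (M : seq nat) : symbol :=
  (sort (fun x y => y <= x)
        ([seq x <- L.1 | x \notin M] ++ [seq x <- L.2 | x \in M]),
   sort (fun x y => y <= x)
        ([seq x <- L.2 | x \notin M] ++ [seq x <- L.1 | x \in M])).

Definition Sbar (Z : symbol) (L : symbol) : Prop :=
  exists M : seq nat, all (inI Z) M /\ L = moveM Z M.

Definition Sdef (Z : symbol) (delta : int) (L : symbol) : Prop :=
  Sbar Z L /\ defect L = delta.

Definition special1 (a b : seq nat) : Prop :=
  size a = (size b).+1 /\
  forall i, i < size b -> nth 0 b i <= nth 0 a i /\ nth 0 a i.+1 <= nth 0 b i.
Definition special0 (c d : seq nat) : Prop :=
  size c = size d /\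
  forall i, i < size d ->
    nth 0 d i <= nth 0 c i /\ (i.+1 < size c -> nth 0 c i.+1 <= nth 0 d i).

(* The condition part of \bar B^+_{Z,Z'} (the defect condition is added below).
   L = (a' ; b') in \bar S_Z, L' = (c' ; d') in \bar S_{Z'}. *)
Definition Bcond (m m' : nat) (L L' : symbol) : Prop :=
  let a' := L.1 in let b' := L.2 in let c' := L'.1 in let d' := L'.2 in
  if m' == m then
    (forall i, 1 <= i <= size d' ->
        ext_lt (ent d' i) (ent a' i) && ext_le (ent a' i.+1) (ent d' i)) /\
    (forall i, 1 <= i <= size c' ->
        ext_lt (ent c' i) (entb b' i.-1) && ext_le (ent b' i) (ent c' i))
  else
    (forall i, 1 <= i <= size d' ->
        ext_le (ent d' i) (ent a' i) && ext_lt (ent a' i.+1) (ent d' i)) /\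
    (forall i, 1 <= i <= size c' ->
        ext_le (ent c' i) (entb b' i.-1) && ext_lt (ent b' i) (ent c' i)).

Definition Bbar_plus (Z Z' : symbol) (m m' : nat) (L L' : symbol) : Prop :=
  Sbar Z L /\ Sbar Z' L' /\ defect L' = (1 - defect L)%R /\ Bcond m m' L L'.

Definition Dset (Z Z' : symbol) (m m' : nat) (L L' : symbol) : Prop :=
  Bbar_plus Z Z' m m' L L' /\ Sdef Z 1 L /\ Sdef Z' 0 L'.

(* Main.v *)
Require Import Defs.
From mathcomp Require Import all_boot all_order all_algebra.
From mathcomp Require Import zify.
Set Implicit Arguments. Unset Strict Implicit. Unset Printing Implicit Defensive.


Fixpoint ilR (R1 R2 : nat -> nat -> bool) (x y : seq nat) : bool :=
  match y, x with
  | [::], _ => true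
  | _ :: _, [::] => false
  | y1 :: y', x1 :: x' =>
      R1 y1 x1 && (if x' is x2 :: _ then R2 x2 y1 else true) && ilR R1 R2 x' y'
  end.

Lemma count0 (p : pred nat) s : (forall v, v \in s -> ~~ p v) -> count p s = 0.
Proof.
move=> h; apply/eqP; rewrite -leqn0 leqNgt -has_count; apply/hasPn => v /h //.
Qed.

Lemma geq_trans' : transitive geq.
Proof. move=> x y z /= h1 h2; exact: leq_trans h2 h1. Qed.

Lemma ilR_count (R1 R2 : nat -> nat -> bool) (p q : pred nat) x y :
  (forall u v, q u -> R1 u v -> p v) ->
  (forall u v, ~~ q u -> R2 v u -> ~~ p v) ->
  (forall u v, ~~ p u -> v <= u -> ~~ p v) ->
  sorted geq x -> ilR R1 R2 x y -> size x <= (size y).+1 ->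
  count q y <= count p x <= (count q y).+1.
Proof.
move=> h1 h2 h3; elim: y x => [|y1 y IH] x /=.
- move=> _ _ hs; have := count_size p x; lia.
- case: x => [|x1 x] //= sx /andP [/andP [r1 r2] il] hs.
  have sx' : sorted geq x by exact: path_sorted sx.
  have := IH x sx' il hs.
  case: (boolP (q y1)) => qy.
  + rewrite (h1 _ _ qy r1) /=; lia.
  + have -> : count p x = 0.
      case: x sx r2 {sx' il hs} => [|x2 x] //= /andP [_ px] r2.
      rewrite -/(count p (x2 :: x)).
      idtac.
      apply: count0 => v; rewrite in_cons => /orP [/eqP -> | vx].
      * exact: h2 qy r2.
      * have := order_path_min geq_trans' px => /allP /(_ v vx) /= vle.
        exact: h3 (h2 _ _ qy r2) vle.
    move=> /= H; case: (p x1) => /=; lia.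
Qed.


Lemma gtn_trans' : transitive (fun x y : nat => y < x).
Proof. move=> x y z /= h1 h2; exact: ltn_trans h2 h1. Qed.

Lemma sd_all x s : strict_dec (x :: s) -> all (fun v => v < x) s.
Proof. move=> h; exact: (order_path_min gtn_trans' h). Qed.

Lemma sd_tail x s : strict_dec (x :: s) -> strict_dec s.
Proof. exact: path_sorted. Qed.

Lemma count_cons1 (p : pred nat) x s : p x -> count p (x :: s) = (count p s).+1.
Proof. by move=> /= ->. Qed.

Lemma count_all0 (p : pred nat) s : all (predC p) s -> count p s = 0.
Proof. by move=> /allP h; apply: count0 => v /h. Qed.

Lemma H1 x y : strict_dec x -> strict_dec y ->
  (forall s, count (fun v => s <= v) y <= count (fun v => s < v) x <= (count (fun v => s <= v) y).+1) ->
  (forall s, count (fun v => s < v) y <= count (fun v => s < v) x <= (count (fun v => s < v) y).+1) ->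
  ilR ltn leq x y.
Proof.
elim: y x => [|y1 y IH] x sx sy h1 h2; first by case: x {sx h1 h2}.
have ay := sd_all sy.
have cy1 : count (fun v => y1 <= v) (y1 :: y) >= 1 by rewrite /= leqnn.
have cy0 : count (fun v => y1 < v) (y1 :: y) = 0.
  by rewrite /= ltnn count_all0 //; apply/allP => v /(allP ay) /=; rewrite -leqNgt; exact: ltnW.
case: x sx h1 h2 => [|x1 x] sx h1 h2.
  by have := h1 y1; move: cy1; rewrite /=; lia.
have ax := sd_all sx.
have lt1 : y1 < x1.
  rewrite ltnNge; apply/negP => le1.
  have cx : count (fun v => y1 < v) (x1 :: x) = 0.
    rewrite count_all0 //= -leqNgt le1 /=.
    by apply/allP => v /(allP ax) /= vx; rewrite -leqNgt; apply: leq_trans le1; exact: ltnW.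
  by have := h1 y1; rewrite cx; move: cy1; lia.
have hx : all (fun v => v <= y1) x.
  case: x sx h1 h2 ax => [|x2 x] //= sx h1 h2 /andP [lt21 ax].
  have le2 : x2 <= y1.
    rewrite leqNgt; apply/negP => lt2.
    have := h2 y1; move: cy0; rewrite /= lt1 lt2 /=; lia.
  case/andP: sx => _ px; rewrite le2 /=; apply/allP => v /(allP (order_path_min gtn_trans' px)) /= vx.
  exact: leq_trans (ltnW vx) le2.
rewrite /= lt1 /=.
apply/andP; split.
  by case: x {sx h1 h2 ax} hx => //= x2 x /andP [].
apply: IH (sd_tail sx) (sd_tail sy) _ _ => s.
- case: (ltnP s y1) => hs.
  + have := h1 s; rewrite /= (ltnW hs) (ltn_trans hs lt1) /=; lia.
  + rewrite !count_all0 //.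
      by apply/allP => v /(allP hx) /= vx; rewrite -leqNgt; exact: leq_trans vx hs.
    by apply/allP => v /(allP ay) /= vx; rewrite -ltnNge; exact: leq_trans vx hs.
- case: (ltnP s y1) => hs.
  + have := h2 s; rewrite /= hs (ltn_trans hs lt1) /=; lia.
  + rewrite !count_all0 //.
      by apply/allP => v /(allP hx) /= vx; rewrite -leqNgt; exact: leq_trans vx hs.
    by apply/allP => v /(allP ay) /= vx; rewrite -leqNgt; exact: leq_trans (ltnW vx) hs.
Qed.

Lemma H2 x y : strict_dec x -> strict_dec y -> size y <= size x ->
  (forall s, count (fun v => s < v) y <= count (fun v => s < v) x <= (count (fun v => s < v) y).+1) ->
  (forall s, count (fun v => s < v) y <= count (fun v => s <= v) x <= (count (fun v => s < v) y).+1) ->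
  ilR leq ltn x y.
Proof.
elim: y x => [|y1 y IH] x sx sy hs h1 h2; first by case: x {sx hs h1 h2}.
have ay := sd_all sy.
have cy0 : count (fun v => y1 < v) (y1 :: y) = 0.
  by rewrite /= ltnn count_all0 //; apply/allP => v /(allP ay) /=; rewrite -leqNgt; exact: ltnW.
case: x sx hs h1 h2 => [|x1 x] sx hs h1 h2; first by [].
have ax := sd_all sx.
have le1 : y1 <= x1.
  rewrite leqNgt; apply/negP => lt1.
  have cx : count (fun v => x1 < v) (x1 :: x) = 0.
    rewrite count_all0 //= ltnn /=.
    by apply/allP => v /(allP ax) /= vx; rewrite -leqNgt; exact: ltnW.
  by have := h1 x1; rewrite cx /= lt1; lia.
have hx : all (fun v => v < y1) x.
  case: x sx hs h1 h2 ax => [|x2 x] //= sx hs h1 h2 /andP [lt21 ax].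
  have lt2 : x2 < y1.
    rewrite ltnNge; apply/negP => le2.
    have := h2 y1; move: cy0; rewrite /= le1 le2 /=; lia.
  case/andP: sx => _ px; rewrite lt2 /=; apply/allP => v /(allP (order_path_min gtn_trans' px)) /= vx.
  exact: ltn_trans vx lt2.
rewrite /= le1 /=.
apply/andP; split.
  by case: x {sx hs h1 h2 ax} hx => //= x2 x /andP [].
apply: IH (sd_tail sx) (sd_tail sy) _ _ _ => //= [s|s].
- case: (ltnP s y1) => hs'.
  + have := h1 s; rewrite /= hs' (leq_trans hs' le1) /=; lia.
  + rewrite !count_all0 //.
      by apply/allP => v /(allP hx) /= vx; rewrite -leqNgt; exact: leq_trans (ltnW vx) hs'.
    by apply/allP => v /(allP ay) /= vx; rewrite -leqNgt; exact: leq_trans (ltnW vx) hs'.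
- case: (ltnP s y1) => hs'.
  + have := h2 s; rewrite /= hs' (leq_trans (ltnW hs') le1) /=; lia.
  + rewrite !count_all0 //.
      by apply/allP => v /(allP hx) /= vx; rewrite -ltnNge; exact: leq_trans vx hs'.
    by apply/allP => v /(allP ay) /= vx; rewrite -leqNgt; exact: leq_trans (ltnW vx) hs'.
Qed.


Lemma ent_cons h t i : 0 < i -> ent (h :: t) i.+1 = ent t i.
Proof. by case: i => // i _; rewrite /ent /=. Qed.

Lemma ent1 h t : ent (h :: t) 1 = Fin h.
Proof. by []. Qed.

Lemma ent2 h h2 t : ent (h :: h2 :: t) 2 = Fin h2.
Proof. by []. Qed.

Lemma ent_nil i : ent [::] i = NegInf.
Proof. by rewrite /ent /=; case: i. Qed.

Lemma posE (E1 E2 : ext -> ext -> bool) (R1 R2 : nat -> nat -> bool) x y :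
  (forall u v, E1 (Fin u) (Fin v) = R1 u v) ->
  (forall u, E1 (Fin u) NegInf = false) ->
  (forall u v, E2 (Fin u) (Fin v) = R2 u v) ->
  (forall u, E2 NegInf (Fin u) = true) ->
  (forall i, 1 <= i <= size y -> E1 (ent y i) (ent x i) && E2 (ent x i.+1) (ent y i))
  <-> ilR R1 R2 x y.
Proof.
move=> e1 e1n e2 e2n.
elim: y x => [|y1 y IH] x.
  by case: x => [|x1 x] /=; split => // _ i; case: i => // i; rewrite ltnNge ltn0S ?andbF.
case: x => [|x1 x].
  split => //= h; have := h 1 isT; by rewrite ent1 ent_nil e1n.
split.
- move=> h; have := h 1 isT; rewrite !ent1 e1 => /andP [r1 h2] /=; rewrite r1 /=.
  apply/andP; split.
    case: x {IH h} h2 => [|x2 x]; rewrite ?ent1 ?ent_nil // e2 //.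
  apply/IH => i /andP [i1 i2].
  by have := h i.+1; rewrite /= ltnS i2 => /(_ isT); rewrite !ent_cons.
- move=> /= /andP [/andP [r1 r2] il] i /andP [i1 i2].
  case: i i1 i2 => [|[|i]] // _ i2.
    rewrite !ent1 e1 r1 /=.
    case: x {IH il} r2 => [|x2 x] r2; [by rewrite ent_cons // ent_nil e2n | by rewrite ent2 e2].
  rewrite !ent_cons //.
  by move/IH: il => /(_ i.+1); rewrite /=; apply.
Qed.

Lemma posB (E1 E2 : ext -> ext -> bool) (R1 : nat -> nat -> bool) B b c :
  (forall u v, E1 (Fin u) (Fin v) = R1 u v) ->
  (forall u, E1 (Fin u) PosInf = true) ->
  (forall v, v \in c -> R1 v B) ->
  (forall i, 1 <= i <= size c -> E1 (ent c i) (entb b i.-1) && E2 (ent b i) (ent c i))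
  <-> (forall i, 1 <= i <= size c -> E1 (ent c i) (ent (B :: b) i) && E2 (ent (B :: b) i.+1) (ent c i)).
Proof.
move=> e1 e1p hB.
suff H : forall i, 1 <= i <= size c ->
  E1 (ent c i) (entb b i.-1) && E2 (ent b i) (ent c i) =
  E1 (ent c i) (ent (B :: b) i) && E2 (ent (B :: b) i.+1) (ent c i).
  by split => h i hi; [rewrite -(H i hi) | rewrite (H i hi)]; apply: h.
move=> i /andP [i1 i2]; rewrite (ent_cons B b i1).
case: i i1 i2 => [|[|i]] // _ i2.
  case: c hB i2 => [|c1 c] // hB _.
  by rewrite /entb /= ent1 e1p e1 hB // mem_head.
Qed.


Lemma count_splitM (p : pred nat) (M s : seq nat) :
  count p [seq x <- s | x \notin M] + count p [seq x <- s | x \in M] = count p s.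
Proof. elim: s => //= v s IH; case: (v \in M) => /=; lia. Qed.

Lemma moveM_count (p : pred nat) (L : symbol) M :
  count p (moveM L M).1 + count p (moveM L M).2 = count p L.1 + count p L.2.
Proof.
have ps : forall r (s : seq nat), perm_eq (sort r s) s by move=> r s; rewrite perm_sort.
rewrite /moveM /= !(permP (ps _ _)) !count_cat.
have := count_splitM p M L.1; have := count_splitM p M L.2.
move=> <- <-; set u1 := count _ _; set u2 := count _ _; set u3 := count _ _; set u4 := count _ _.
lia.
Qed.

Lemma moveM_size (L : symbol) M :
  size (moveM L M).1 + size (moveM L M).2 = size L.1 + size L.2.
Proof. by rewrite -!(count_predT) moveM_count. Qed.

Lemma geq_total : total (fun x y : nat => y <= x).
Proof. by move=> x y; rewrite orbC leq_total. Qed.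

Lemma moveM_sorted1 (L : symbol) M : sorted geq (moveM L M).1.
Proof. exact: (sort_sorted geq_total). Qed.

Lemma moveM_sorted2 (L : symbol) M : sorted geq (moveM L M).2.
Proof. exact: (sort_sorted geq_total). Qed.

Lemma moveM_mem1 (L : symbol) M v : v \in (moveM L M).1 -> v \in L.1 ++ L.2.
Proof.
rewrite /moveM /= mem_sort !mem_cat !mem_filter.
by case/orP => /andP [_ ->]; rewrite ?orbT.
Qed.

Lemma moveM_mem2 (L : symbol) M v : v \in (moveM L M).2 -> v \in L.1 ++ L.2.
Proof.
rewrite /moveM /= mem_sort !mem_cat !mem_filter.
by case/orP => /andP [_ ->]; rewrite ?orbT.
Qed.

Lemma special1_il a b : special1 a b -> ilR leq leq a b.
Proof.
elim: b a => [|b1 b IH] [|a1 a] [hs h] //=.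
have [h1 h2] := h 0 isT.
have IH' := IH a.
case: a hs h h1 h2 IH' => [|a2 a] //= hs h h1 h2 IH'.
rewrite h1 h2 /=; apply: IH'; split.
  by move: hs => /= [->].
by move=> i hi; apply: (h i.+1).
Qed.

Lemma special0_il c d : special0 c d -> ilR leq leq c d.
Proof.
elim: d c => [|d1 d IH] [|c1 c] [hs h] //=.
have [h1 h2] := h 0 isT.
have IH' := IH c.
rewrite h1 /=; apply/andP; split.
  case: c hs h h1 h2 {IH IH'} => [|c2 c] //= hs h h1 h2.
  exact: h2.
apply: IH'; split; first by case: hs.
by move=> i hi; apply: (h i.+1).
Qed.


Definition cg s (l : seq nat) := count (fun v => s < v) l.
Definition ce s (l : seq nat) := count (fun v => s <= v) l.

Lemma Glt1 s x y : sorted geq x -> ilR ltn leq x y -> size x <= (size y).+1 ->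
  ce s y <= cg s x <= (ce s y).+1.
Proof. apply: ilR_count => u v /=; lia. Qed.
Lemma Glt2 s x y : sorted geq x -> ilR ltn leq x y -> size x <= (size y).+1 ->
  cg s y <= cg s x <= (cg s y).+1.
Proof. apply: ilR_count => u v /=; lia. Qed.
Lemma Gle1 s x y : sorted geq x -> ilR leq ltn x y -> size x <= (size y).+1 ->
  cg s y <= cg s x <= (cg s y).+1.
Proof. apply: ilR_count => u v /=; lia. Qed.
Lemma Gle2 s x y : sorted geq x -> ilR leq ltn x y -> size x <= (size y).+1 ->
  cg s y <= ce s x <= (cg s y).+1.
Proof. apply: ilR_count => u v /=; lia. Qed.
Lemma Gw1 s x y : sorted geq x -> ilR leq leq x y -> size x <= (size y).+1 ->
  cg s y <= cg s x <= (cg s y).+1.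
Proof. apply: ilR_count => u v /=; lia. Qed.
Lemma Gw2 s x y : sorted geq x -> ilR leq leq x y -> size x <= (size y).+1 ->
  ce s y <= ce s x <= (ce s y).+1.
Proof. apply: ilR_count => u v /=; lia. Qed.

Lemma cg_cons s h l : cg s (h :: l) = (s < h) + cg s l.
Proof. by []. Qed.
Lemma ce_cons s h l : ce s (h :: l) = (s <= h) + ce s l.
Proof. by []. Qed.

Lemma sd_geq l : strict_dec l -> sorted geq l.
Proof. apply: sub_sorted => u v /=; lia. Qed.

Lemma mem_sumn v l : v \in l -> v <= sumn l.
Proof.
elim: l => //= u l IH; rewrite in_cons => /orP [/eqP -> | /IH]; lia.
Qed.

Lemma cnt0 B s l : (forall v, v \in l -> v < B) -> B <= s -> cg s l = 0 /\ ce s l = 0.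
Proof.
move=> h hs; split; apply: count0 => v /h /=; lia.
Qed.

Lemma sd_cons B l : (forall v, v \in l -> v < B) -> strict_dec l -> strict_dec (B :: l).
Proof.
case: l => [|v l] //= h ->; rewrite andbT; apply: h; exact: mem_head.
Qed.

Lemma geq_cons B l : (forall v, v \in l -> v < B) -> sorted geq l -> sorted geq (B :: l).
Proof.
case: l => [|v l] //= h ->; rewrite andbT; apply: ltnW; apply: h; exact: mem_head.
Qed.


Lemma fl1 u v : ext_lt (Fin u) (Fin v) = (u < v). Proof. by rewrite /ext_lt /= ltnNge. Qed.
Lemma fl2 u : ext_lt (Fin u) NegInf = false. Proof. by []. Qed.
Lemma fl3 u : ext_lt (Fin u) PosInf = true. Proof. by []. Qed.
Lemma fl4 u : ext_lt NegInf (Fin u) = true. Proof. by []. Qed.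
Lemma fe1 u v : ext_le (Fin u) (Fin v) = (u <= v). Proof. by []. Qed.
Lemma fe2 u : ext_le NegInf (Fin u) = true. Proof. by []. Qed.
Lemma fe3 u : ext_le (Fin u) PosInf = true. Proof. by []. Qed.
Lemma fe4 u : ext_le (Fin u) NegInf = false. Proof. by []. Qed.

Lemma H1c x y : strict_dec x -> strict_dec y ->
  (forall s, ce s y <= cg s x <= (ce s y).+1) ->
  (forall s, cg s y <= cg s x <= (cg s y).+1) -> ilR ltn leq x y.
Proof. exact: H1. Qed.

Lemma H2c x y : strict_dec x -> strict_dec y -> size y <= size x ->
  (forall s, cg s y <= cg s x <= (cg s y).+1) ->
  (forall s, cg s y <= ce s x <= (cg s y).+1) -> ilR leq ltn x y.
Proof. exact: H2. Qed.

Lemma parity A Bb C D A0 B0 C0 D0 :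
  D <= A <= D.+1 -> C <= Bb.+1 <= C.+1 -> A + Bb = A0 + B0 -> C + D = C0 + D0 ->
  B0 <= A0 <= B0.+1 -> D0 <= C0 <= D0.+1 ->
  (D0 <= A0 <= D0.+1) /\ (C0 <= B0.+1 <= C0.+1).
Proof. lia. Qed.

Lemma BZ a b c d m m' : strict_dec a -> strict_dec b -> strict_dec c -> strict_dec d ->
  size b = m -> special1 a b -> size d = m' -> special0 c d -> (m' = m \/ m' = m.+1) ->
  (exists L L', Dset (a, b) (c, d) m m' L L') -> Bcond m m' (a, b) (c, d).
Proof.
move=> sa sb sc sd hb s1 hd s0 hm [L [L' [[[M [_ eL]] [[N [_ eL']] [_ hB]]] [[_ hd1] [_ hd0]]]]].
subst L L'.
have ila := special1_il s1; have ilc := special0_il s0.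
have [hsa _] := s1; have [hsc _] := s0.
have sz := moveM_size (a, b) M; have sz' := moveM_size (c, d) N.
have sa' := moveM_sorted1 (a, b) M; have sb' := moveM_sorted2 (a, b) M.
have sc' := moveM_sorted1 (c, d) N; have sd' := moveM_sorted2 (c, d) N.
have ma' := @moveM_mem1 (a, b) M; have mb' := @moveM_mem2 (a, b) M.
have mc' := @moveM_mem1 (c, d) N; have md' := @moveM_mem2 (c, d) N.
have cnt1 := fun p => moveM_count p (a, b) M.
have cnt2 := fun p => moveM_count p (c, d) N.
move: hB hd1 hd0 sz sz' sa' sb' sc' sd' ma' mb' mc' md' cnt1 cnt2.
move: (moveM (a, b) M) (moveM (c, d) N) => [a' b'] [c' d'].
rewrite /defect /= => hB hd1 hd0 sz sz' sa' sb' sc' sd' ma' mb' mc' md' cnt1 cnt2.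
have [Ea' Eb'] : size a' = (size b).+1 /\ size b' = size b by clear -hd1 sz hsa; lia.
have [Ec' Ed'] : size c' = size d /\ size d' = size d by clear -hd0 sz' hsc; lia.
clear hd1 hd0 sz sz'.
pose B := (sumn (a ++ b ++ c ++ d)).+1.
have hB0 : forall v, v \in a ++ b ++ c ++ d -> v < B by move=> v /mem_sumn; rewrite /B ltnS.
have bA : forall v, v \in a -> v < B by move=> v h; apply: hB0; rewrite !mem_cat h.
have bB : forall v, v \in b -> v < B by move=> v h; apply: hB0; rewrite !mem_cat h !orbT.
have bC : forall v, v \in c -> v < B by move=> v h; apply: hB0; rewrite !mem_cat h !orbT.
have bD : forall v, v \in d -> v < B by move=> v h; apply: hB0; rewrite !mem_cat h !orbT.
have bB' : forall v, v \in b' -> v < B by move=> v /mb'; rewrite mem_cat => /orP [/bA|/bB].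
have bC' : forall v, v \in c' -> v < B by move=> v /mc'; rewrite mem_cat => /orP [/bC|/bD].
have sB : strict_dec (B :: b) := sd_cons bB sb.
have sB' : sorted geq (B :: b') := geq_cons bB' sb'.
have ia : forall s, cg s a' + cg s b' = cg s a + cg s b by move=> s; exact: cnt1.
have ja : forall s, ce s a' + ce s b' = ce s a + ce s b by move=> s; exact: cnt1.
have ic : forall s, cg s c' + cg s d' = cg s c + cg s d by move=> s; exact: cnt2.
have jc : forall s, ce s c' + ce s d' = ce s c + ce s d by move=> s; exact: cnt2.
have w1 : forall s, cg s b <= cg s a <= (cg s b).+1.
  by move=> s; apply: Gw1 => //; [exact: sd_geq | rewrite hsa].
have w2 : forall s, ce s b <= ce s a <= (ce s b).+1.
  by move=> s; apply: Gw2 => //; [exact: sd_geq | rewrite hsa].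
have w3 : forall s, cg s d <= cg s c <= (cg s d).+1.
  by move=> s; apply: Gw1 => //; [exact: sd_geq | rewrite hsc].
have w4 : forall s, ce s d <= ce s c <= (ce s d).+1.
  by move=> s; apply: Gw2 => //; [exact: sd_geq | rewrite hsc].
have zero : forall s, B <= s -> [/\ cg s a = 0, cg s b = 0, cg s c = 0, cg s d = 0 &
   [/\ ce s a = 0, ce s b = 0, ce s c = 0 & ce s d = 0]].
  move=> s hs; have [? ?] := cnt0 bA hs; have [? ?] := cnt0 bB hs;
  have [? ?] := cnt0 bC hs; have [? ?] := cnt0 bD hs; by split.
case: hm => hm; subst m'.
- have hdm : (size d == m) = true by rewrite hm eqxx.
  have szad : size a' <= (size d').+1 by rewrite Ea' Ed' hm hb.
  have szbc : size (B :: b') <= (size c').+1 by rewrite /= Eb' Ec' hm hb.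
  move: hB; rewrite /Bcond /= ?hdm ?eqxx => -[hd' hc'].
  have il1 := (posE _ _ fl1 fl2 fe1 fe2).1 hd'.
  have il2 := (posE _ _ fl1 fl2 fe1 fe2).1 ((posB _ _ fl1 fl3 bC').1 hc').
  rewrite /Bcond /= ?hdm ?eqxx; split.
    apply/(posE _ _ fl1 fl2 fe1 fe2); apply: H1c => // s.
    + case: (ltnP s B) => hs; last by case: (zero s hs) => z1 z2 z3 z4 [z5 z6 z7 z8]; rewrite ?z1 ?z2 ?z3 ?z4 ?z5 ?z6 ?z7 ?z8 ?(ltnNge s B) ?hs.
      have := Glt1 s sB' il2 szbc; rewrite cg_cons hs => g3.
      exact: (parity (Glt1 s sa' il1 szad) g3 (ia s) (jc s) (w1 s) (w4 s)).1.
    + case: (ltnP s B) => hs; last by case: (zero s hs) => z1 z2 z3 z4 [z5 z6 z7 z8]; rewrite ?z1 ?z2 ?z3 ?z4 ?z5 ?z6 ?z7 ?z8 ?(ltnNge s B) ?hs.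
      have := Glt2 s sB' il2 szbc; rewrite cg_cons hs => g4.
      exact: (parity (Glt2 s sa' il1 szad) g4 (ia s) (ic s) (w1 s) (w3 s)).1.
  apply/(posB _ _ fl1 fl3 bC); apply/(posE _ _ fl1 fl2 fe1 fe2); apply: H1c => // s.
  + rewrite cg_cons.
    case: (ltnP s B) => hs; last by case: (zero s hs) => z1 z2 z3 z4 [z5 z6 z7 z8]; rewrite ?z1 ?z2 ?z3 ?z4 ?z5 ?z6 ?z7 ?z8 ?(ltnNge s B) ?hs.
    have := Glt1 s sB' il2 szbc; rewrite cg_cons hs => g3.
    rewrite add1n; exact: (parity (Glt1 s sa' il1 szad) g3 (ia s) (jc s) (w1 s) (w4 s)).2.
  + rewrite cg_cons.
    case: (ltnP s B) => hs; last by case: (zero s hs) => z1 z2 z3 z4 [z5 z6 z7 z8]; rewrite ?z1 ?z2 ?z3 ?z4 ?z5 ?z6 ?z7 ?z8 ?(ltnNge s B) ?hs.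
    have := Glt2 s sB' il2 szbc; rewrite cg_cons hs => g4.
    rewrite add1n; exact: (parity (Glt2 s sa' il1 szad) g4 (ia s) (ic s) (w1 s) (w3 s)).2.
- have hdm : (size d == m) = false by rewrite hm (gtn_eqF (ltnSn m)).
  have szad : size a' <= (size d').+1 by rewrite Ea' Ed' hm hb.
  have szbc : size (B :: b') <= (size c').+1 by rewrite /= Eb' Ec' hm hb.
  have bCle : forall v, v \in c -> v <= B by move=> v /bC /ltnW.
  have bCle' : forall v, v \in c' -> v <= B by move=> v /bC' /ltnW.
  move: hB; rewrite /Bcond /= hdm => -[hd' hc'].
  have il1 := (posE _ _ fe1 fe4 fl1 fl4).1 hd'.
  have il2 := (posE _ _ fe1 fe4 fl1 fl4).1 ((posB _ _ fe1 fe3 bCle').1 hc').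
  split.
    apply/(posE _ _ fe1 fe4 fl1 fl4); apply: H2c => // [|s|s].
    + by rewrite hsa hm hb.
    + case: (ltnP s B) => hs; last by case: (zero s hs) => z1 z2 z3 z4 [z5 z6 z7 z8]; rewrite ?z1 ?z2 ?z3 ?z4 ?z5 ?z6 ?z7 ?z8 ?(ltnNge s B) ?hs; case: (s <= B).
      have := Gle1 s sB' il2 szbc; rewrite cg_cons hs => g3.
      exact: (parity (Gle1 s sa' il1 szad) g3 (ia s) (ic s) (w1 s) (w3 s)).1.
    + case: (ltnP s B) => hs; last by case: (zero s hs) => z1 z2 z3 z4 [z5 z6 z7 z8]; rewrite ?z1 ?z2 ?z3 ?z4 ?z5 ?z6 ?z7 ?z8 ?(ltnNge s B) ?hs; case: (s <= B).
      have := Gle2 s sB' il2 szbc; rewrite ce_cons (ltnW hs) => g4.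
      exact: (parity (Gle2 s sa' il1 szad) g4 (ja s) (ic s) (w2 s) (w3 s)).1.
  apply/(posB _ _ fe1 fe3 bCle); apply/(posE _ _ fe1 fe4 fl1 fl4); apply: H2c => // [|s|s].
  + by rewrite /= hsc hm hb.
  + rewrite cg_cons.
    case: (ltnP s B) => hs; last by case: (zero s hs) => z1 z2 z3 z4 [z5 z6 z7 z8]; rewrite ?z1 ?z2 ?z3 ?z4 ?z5 ?z6 ?z7 ?z8 ?(ltnNge s B) ?hs; case: (s <= B).
    have := Gle1 s sB' il2 szbc; rewrite cg_cons hs => g3.
    rewrite add1n; exact: (parity (Gle1 s sa' il1 szad) g3 (ia s) (ic s) (w1 s) (w3 s)).2.
  + rewrite ce_cons.
    case: (ltnP s B) => hs; last by case: (zero s hs) => z1 z2 z3 z4 [z5 z6 z7 z8]; rewrite ?z1 ?z2 ?z3 ?z4 ?z5 ?z6 ?z7 ?z8 ?(ltnNge s B) ?hs; case: (s <= B).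
    have := Gle2 s sB' il2 szbc; rewrite ce_cons (ltnW hs) => g4.
    rewrite add1n; exact: (parity (Gle2 s sa' il1 szad) g4 (ja s) (ic s) (w2 s) (w3 s)).2.
Qed.


Lemma sd_uniq s : strict_dec s -> uniq s.
Proof. apply: sorted_uniq; [exact: gtn_trans' | by move=> x /=; rewrite ltnn]. Qed.

Lemma split_nth (s : seq nat) i : i < size s -> s = take i s ++ nth 0 s i :: drop i.+1 s.
Proof. by move=> hi; rewrite -drop_nth // cat_take_drop. Qed.

Lemma filter_out (s M : seq nat) i : uniq s -> i < size s ->
  (forall y, y \in s -> y \in M -> y = nth 0 s i) -> nth 0 s i \in M ->
  [seq y <- s | y \notin M] = take i s ++ drop i.+1 s.
Proof.
move=> us hi h hM.
have e := split_nth hi.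
have [nt nd'] : nth 0 s i \notin take i s /\ nth 0 s i \notin drop i.+1 s.
  move: us; rewrite {1}e cat_uniq /= => /and3P [_ h1 /andP [nd' _]].
  by move: h1; rewrite negb_or => /andP [nt _].
rewrite {1}e filter_cat /= hM /=.
congr (_ ++ _); apply/all_filterP/allP => y hy; apply/negP => yM.
- have ey := h y (mem_take hy) yM; move: nt; by rewrite -ey hy.
- have ey := h y (mem_drop hy) yM; move: nd'; by rewrite -ey hy.
Qed.

Lemma filter_in (s M : seq nat) i : uniq s -> i < size s ->
  (forall y, y \in s -> y \in M -> y = nth 0 s i) -> nth 0 s i \in M ->
  [seq y <- s | y \in M] = [:: nth 0 s i].
Proof.
move=> us hi h hM.
have e := split_nth hi.
have [nt nd'] : nth 0 s i \notin take i s /\ nth 0 s i \notin drop i.+1 s.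
  move: us; rewrite {1}e cat_uniq /= => /and3P [_ h1 /andP [nd' _]].
  by move: h1; rewrite negb_or => /andP [nt _].
rewrite {1}e filter_cat /= hM.
have -> : [seq y <- take i s | y \in M] = [::].
  apply/eqP; rewrite -size_eq0 size_filter -leqn0 leqNgt -has_count; apply/hasPn => y hy /=.
  apply/negP => yM; have ey := h y (mem_take hy) yM; move: nt; by rewrite -ey hy.
have -> : [seq y <- drop i.+1 s | y \in M] = [::].
  apply/eqP; rewrite -size_eq0 size_filter -leqn0 leqNgt -has_count; apply/hasPn => y hy /=.
  apply/negP => yM; have ey := h y (mem_drop hy) yM; move: nd'; by rewrite -ey hy.
by [].
Qed.

Lemma geq_antisym : antisymmetric geq.
Proof. move=> x y /andP [h1 h2]; apply/eqP; rewrite eqn_leq; apply/andP; split; [exact: h2 | exact: h1]. Qed.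

Lemma sort_set (s t M : seq nat) i v : uniq s -> i < size s ->
  (forall y, y \in s -> y \in M -> y = nth 0 s i) -> nth 0 s i \in M ->
  [seq y <- t | y \in M] = [:: v] ->
  sorted geq (set_nth 0 s i v) ->
  sort (fun x y => y <= x) ([seq y <- s | y \notin M] ++ [seq y <- t | y \in M]) = set_nth 0 s i v.
Proof.
move=> us hi h hM ht srt.
apply: (sorted_eq geq_trans' geq_antisym) => //.
  exact: (sort_sorted geq_total).
rewrite perm_sort (filter_out us hi h hM) ht set_nthE hi -catA perm_cat2l.
by rewrite cats1 perm_rcons.
Qed.

Lemma moveM_psi a b i j : strict_dec a -> strict_dec b -> i < size a -> j < size b ->
  inI (a, b) (nth 0 a i) -> inI (a, b) (nth 0 b j) ->
  sorted geq (set_nth 0 a i (nth 0 b j)) -> sorted geq (set_nth 0 b j (nth 0 a i)) ->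
  moveM (a, b) [:: nth 0 a i; nth 0 b j] = (set_nth 0 a i (nth 0 b j), set_nth 0 b j (nth 0 a i)).
Proof.
move=> sa sb hi hj ia ib s1 s2.
have ua := sd_uniq sa; have ub := sd_uniq sb.
have ai : nth 0 a i \in a := mem_nth 0 hi.
have bj : nth 0 b j \in b := mem_nth 0 hj.
have nai : nth 0 a i \notin b by move: ia; rewrite /inI /= ai.
have nbj : nth 0 b j \notin a by move: ib; rewrite /inI /= bj; case: (_ \in a).
rewrite /moveM /=; congr (_, _).
- apply: sort_set => //.
  + move=> y ya; rewrite !inE => /orP [/eqP // | /eqP ey]; by move: nbj; rewrite -ey ya.
  + by rewrite !inE eqxx.
  + apply: filter_in => //.
    * move=> y yb; rewrite !inE => /orP [/eqP ey | /eqP //]; by move: nai; rewrite -ey yb.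
    * by rewrite !inE eqxx orbT.
- apply: sort_set => //.
  + move=> y yb; rewrite !inE => /orP [/eqP ey | /eqP //]; by move: nai; rewrite -ey yb.
  + by rewrite !inE eqxx orbT.
  + apply: filter_in => //.
    * move=> y ya; rewrite !inE => /orP [/eqP // | /eqP ey]; by move: nbj; rewrite -ey ya.
    * by rewrite !inE eqxx.
Qed.


Definition nc (e : ext) : nat := match e with NegInf => 0 | Fin n => n.+1 | PosInf => 0 end.

Lemma ent_cases s i : ent s i = NegInf \/ exists n, ent s i = Fin n.
Proof. rewrite /ent; case: ifP => _; [right; eexists; reflexivity | by left]. Qed.

Lemma leE s i s' j : ext_le (ent s i) (ent s' j) = (nc (ent s i) <= nc (ent s' j)).
Proof.
by case: (ent_cases s i) => [->|[n ->]]; case: (ent_cases s' j) => [->|[n' ->]].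
Qed.

Lemma ltE s i s' j : ext_lt (ent s i) (ent s' j) = (nc (ent s i) < nc (ent s' j)).
Proof.
rewrite /ext_lt leE; lia.
Qed.

Lemma lePos s i : ext_le (ent s i) PosInf = true.
Proof. by case: (ent_cases s i) => [->|[n ->]]. Qed.

Lemma ltPos s i : ext_lt (ent s i) PosInf = true.
Proof. by case: (ent_cases s i) => [->|[n ->]]. Qed.

Ltac ext_solve :=
  rewrite ?leE ?ltE ?lePos ?ltPos;
  repeat match goal with
  | H : context[ent _ _] |- _ => clear H
  | H : context[entb _ _] |- _ => clear H
  | H : forall _, _ |- _ => clear H end;
  lia.

Ltac splitifs :=
  repeat match goal with |- context[if ?b then _ else _] =>
    case: ifP => [/eqP ?|/negbT/eqP ?] end.

Lemma entF s t : 0 < t <= size s -> ent s t = Fin (nth 0 s t.-1).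
Proof. by rewrite /ent => ->. Qed.

Lemma ent_out s t : size s < t -> ent s t = NegInf.
Proof. by rewrite /ent => h; rewrite (leqNgt t) h andbF. Qed.

Lemma ent_set (s : seq nat) k v t : 0 < k <= size s ->
  ent (set_nth 0 s k.-1 v) t = if t == k then Fin v else ent s t.
Proof.
case/andP => k0 ks; rewrite /ent size_set_nth prednK // (maxn_idPr ks) nth_set_nth /=.
case: (eqVneq t k) => [->|tk]; first by rewrite k0 ks eqxx.
case: t tk => [|t] tk //=.
by rewrite -(prednK k0) eqSS in tk; rewrite (negbTE tk).
Qed.

Lemma entb_set (s : seq nat) k v t : 0 < k <= size s ->
  entb (set_nth 0 s k.-1 v) t = if t == k then Fin v else entb s t.
Proof.
move=> hk; rewrite /entb ent_set //; case: (eqVneq t 0) => [->|//].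
by case/andP: hk; case: k.
Qed.

Ltac fin := rewrite ?eqSS; splitifs; try subst; rewrite ?succnK; ext_solve.

Lemma loc a b c d m m' k l :
  size b = m -> size a = m.+1 -> size d = m' -> size c = m' -> (m' = m \/ m' = m.+1) ->
  (forall t, ext_le (ent b t) (ent a t)) -> (forall t, 0 < t -> ext_le (ent a t.+1) (ent b t)) ->
  1 <= k <= m.+1 -> 1 <= l <= m -> (l = k \/ l = k.-1) ->
  Bcond m m' (a, b) (c, d) ->
  (Bcond m m' (set_nth 0 a k.-1 (nth 0 b l.-1), set_nth 0 b l.-1 (nth 0 a k.-1)) (c, d) <->
   (if m' == m then
      (if l == k then ext_le (ent a k) (ent c k) && ext_lt (ent d k) (ent b k)
       else ext_lt (ent c k) (ent a k) && ext_le (ent b k.-1) (ent d k.-1))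
    else
      (if l == k then ext_lt (ent a k) (ent c k) && ext_le (ent d k) (ent b k)
       else ext_le (ent c k) (ent a k) && ext_lt (ent b k.-1) (ent d k.-1)))).
Proof.
move=> hb ha hd hc hm E1 E2 hk hl hkl hZ.
have hka : 0 < k <= size a by rewrite ha.
have hlb : 0 < l <= size b by rewrite hb.
have eA : forall t, ent (set_nth 0 a k.-1 (nth 0 b l.-1)) t = if t == k then ent b l else ent a t.
  by move=> t; rewrite ent_set // (entF hlb).
have eB : forall t, ent (set_nth 0 b l.-1 (nth 0 a k.-1)) t = if t == l then ent a k else ent b t.
  by move=> t; rewrite ent_set // (entF hka).
have eBb : forall t, entb (set_nth 0 b l.-1 (nth 0 a k.-1)) t = if t == l then ent a k else entb b t.
  by move=> t; rewrite entb_set // (entF hka).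
move: hZ; rewrite /Bcond /=.
case: hm => hm; rewrite hm in hd hc *.
- rewrite eqxx => -[hZd hZc].
  case: hkl => hkl.
  + subst l; rewrite eqxx; split.
    * case=> hd' hc'.
      have := hc' k; have := hd' k; rewrite hd hc !eA !eB; fin.
    * move=> /andP [r1 r2]; split.
      - move=> t ht; move: (hZd t ht) r1 r2 (E1 k); rewrite !eA; fin.
      - case=> [|[|u]] ht //.
          by move: (hZc 1 ht) r1 r2 (E1 k); rewrite /= eBb eB /entb /=; fin.
        move: (hZc _ ht) r1 r2 (E1 k); rewrite !eB !eBb /entb /=; fin.
  + have ek : k = l.+1 by clear -hk hl hkl; move: hk hl; rewrite hkl; lia.
    subst k; rewrite (ltn_eqF (ltnSn l)) succnK; split.
    * case=> hd' hc'.
      case: (leqP l.+1 (size c)) => hkc.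
        have := hc' l.+1; have := hd' l; rewrite hd hc !eA !eB !eBb /entb /=; fin.
      have := hd' l; rewrite hd (ent_out hkc) (entF hka) !eA (_ : ext_lt NegInf _ = true) //; fin.
    * move=> /andP [r1 r2]; split.
      - move=> t ht; move: (hZd t ht) r1 r2 (E2 l); rewrite !eA; fin.
      - case=> [|[|u]] ht //.
          by move: (hZc 1 ht) r1 r2 (E2 l); rewrite /= eBb eB /entb /=; fin.
        move: (hZc _ ht) r1 r2 (E2 l); rewrite !eB !eBb /entb /=; fin.
- rewrite (gtn_eqF (ltnSn m)) => -[hZd hZc].
  case: hkl => hkl.
  + subst l; rewrite eqxx; split.
    * case=> hd' hc'.
      have := hc' k; have := hd' k; rewrite hd hc !eA !eB; fin.
    * move=> /andP [r1 r2]; split.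
      - move=> t ht; move: (hZd t ht) r1 r2 (E1 k); rewrite !eA; fin.
      - case=> [|[|u]] ht //.
          by move: (hZc 1 ht) r1 r2 (E1 k); rewrite /= eBb eB /entb /=; fin.
        move: (hZc _ ht) r1 r2 (E1 k); rewrite !eB !eBb /entb /=; fin.
  + have ek : k = l.+1 by clear -hk hl hkl; move: hk hl; rewrite hkl; lia.
    subst k; rewrite (ltn_eqF (ltnSn l)) succnK; split.
    * case=> hd' hc'.
      have := hc' l.+1; have := hd' l; rewrite hd hc !eA !eB !eBb /entb /=; fin.
    * move=> /andP [r1 r2]; split.
      - move=> t ht; move: (hZd t ht) r1 r2 (E2 l); rewrite !eA; fin.
      - case=> [|[|u]] ht //.
          by move: (hZc 1 ht) r1 r2 (E2 l); rewrite /= eBb eB /entb /=; fin.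
        move: (hZc _ ht) r1 r2 (E2 l); rewrite !eB !eBb /entb /=; fin.
Qed.


Lemma sorted_set (s : seq nat) i v : sorted geq s -> i < size s ->
  (0 < i -> v <= nth 0 s i.-1) -> (i.+1 < size s -> nth 0 s i.+1 <= v) ->
  sorted geq (set_nth 0 s i v).
Proof.
move=> ss hi h1 h2; have /(sortedP 0) sP := ss.
apply/(sortedP 0) => t; rewrite size_set_nth (maxn_idPr hi) => ht; rewrite !nth_set_nth /=.
case: (eqVneq t i) => [ti|ti]; case: (eqVneq t.+1 i) => [ti'|ti'].
- by move: ti'; rewrite ti => /eqP; rewrite (gtn_eqF (ltnSn i)).
- by subst t; apply: h2.
- by subst i; apply: h1.
- exact: sP.
Qed.

Lemma E1 a b : special1 a b -> forall t, ext_le (ent b t) (ent a t).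
Proof.
case=> hsa sp t.
case: (leqP t (size b)) => ht; last by rewrite ent_out.
case: t ht => [|t] ht; first by rewrite /ent.
rewrite (entF (s := b)) ?(entF (s := a)) /=.
all: try by rewrite ?hsa; lia.
by case: (sp t ht).
Qed.

Lemma E2 a b : special1 a b -> forall t, 0 < t -> ext_le (ent a t.+1) (ent b t).
Proof.
case=> hsa sp t t0.
case: (leqP t (size b)) => ht; last by rewrite ent_out // hsa.
rewrite (entF (s := b)) ?(entF (s := a)) /=.
all: try by rewrite ?hsa; lia.
have := sp t.-1; rewrite prednK //; case; first lia.
by move=> _.
Qed.

Lemma sdnth s t : strict_dec s -> t.+1 < size s -> nth 0 s t.+1 <= nth 0 s t.
Proof. by move=> /sd_geq /(sortedP 0) h /h. Qed.

Lemma st_eq a b i : strict_dec a -> strict_dec b -> special1 a b -> i < size b ->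
  sorted geq (set_nth 0 a i (nth 0 b i)) /\ sorted geq (set_nth 0 b i (nth 0 a i)).
Proof.
move=> sa sb [hsa sp] hi; split; apply: sorted_set; try exact: sd_geq.
- by rewrite hsa; lia.
- move=> i0; have := sp i hi; have := @sdnth a i.-1 sa; rewrite prednK // hsa; lia.
- by move=> _; case: (sp i hi).
- by [].
- move=> i0; have := sp i.-1; rewrite prednK //; lia.
- move=> h; have := sp i hi; have := @sdnth b i sb h; lia.
Qed.

Lemma st_pred a b j : strict_dec a -> strict_dec b -> special1 a b -> j < size b ->
  sorted geq (set_nth 0 a j.+1 (nth 0 b j)) /\ sorted geq (set_nth 0 b j (nth 0 a j.+1)).
Proof.
move=> sa sb [hsa sp] hj'.
split; apply: sorted_set; try exact: sd_geq.
- by rewrite hsa; lia.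
- by move=> _; case: (sp j hj').
- move=> h; have := sp j hj'; have := @sdnth a j.+1 sa h; lia.
- lia.
- move=> j0; have := sp j.-1; rewrite prednK //; have := @sdnth a j sa; rewrite hsa; lia.
- by move=> h; case: (sp j.+1 h).
Qed.

Unset Implicit Arguments.

Theorem lemma0701 (a b c d : seq nat) (m m' k l : nat) :
  strict_dec a -> strict_dec b -> strict_dec c -> strict_dec d ->
  size b = m -> special1 a b ->
  size d = m' -> special0 c d ->
  (m' = m \/ m' = m.+1) ->
  (* Psi = (a_k ; b_l) is a consecutive pair in Z_I *)
  1 <= k <= m.+1 -> 1 <= l <= m -> (l = k \/ l = k.-1) ->
  inI (a, b) (nth 0 a k.-1) -> inI (a, b) (nth 0 b l.-1) ->
  (* D_{Z,Z'} nonempty *)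
  (exists L L', Dset (a, b) (c, d) m m' L L') ->
  (Dset (a, b) (c, d) m m' (moveM (a, b) [:: nth 0 a k.-1; nth 0 b l.-1]) (c, d)
   <->
   (if m' == m then
      (if l == k then ext_le (ent a k) (ent c k) && ext_lt (ent d k) (ent b k)
       else ext_lt (ent c k) (ent a k) && ext_le (ent b k.-1) (ent d k.-1))
    else
      (if l == k then ext_lt (ent a k) (ent c k) && ext_le (ent d k) (ent b k)
       else ext_le (ent c k) (ent a k) && ext_lt (ent b k.-1) (ent d k.-1)))).
Proof.
move=> sa sb sc sd hb s1 hd s0 hm hk hl hkl ia ib hD.
have hZ := BZ sa sb sc sd hb s1 hd s0 hm hD.
have [hsa sp] := s1; have [hsc _] := s0.
have hi : k.-1 < size a by rewrite hsa hb; lia.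
have hj : l.-1 < size b by rewrite hb; lia.
have [st1 st2] : sorted geq (set_nth 0 a k.-1 (nth 0 b l.-1)) /\
                 sorted geq (set_nth 0 b l.-1 (nth 0 a k.-1)).
  case: hkl => hkl.
  - subst l; apply: st_eq => //.
  - have [j ej] : exists j, l = j.+1 by case: (l) hl => // j _; exists j.
    have ek : k = j.+2 by move: hk; rewrite ej in hkl; lia.
    subst k l; exact: st_pred.
have eM := moveM_psi sa sb hi hj ia ib st1 st2.
rewrite -(loc hb (etrans hsa (congr1 _ hb)) hd (etrans hsc hd) hm (E1 s1) (E2 s1) hk hl hkl hZ).
split; first by case=> [[_ [_ [_ h]]] _]; rewrite -eM.
move=> h.
have dL : defect (moveM (a, b) [:: nth 0 a k.-1; nth 0 b l.-1]) = 1%R.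
  rewrite eM /defect /= !size_set_nth (maxn_idPr hi) (maxn_idPr hj) hsa.
  by rewrite -addn1 PoszD GRing.addrAC GRing.subrr GRing.add0r.
have dZ : defect (c, d) = 0%R by rewrite /defect /= hsc GRing.subrr.
have SZ : Sbar (a, b) (moveM (a, b) [:: nth 0 a k.-1; nth 0 b l.-1]).
  by exists [:: nth 0 a k.-1; nth 0 b l.-1]; split => //=; rewrite ia ib.
have SZ' : Sbar (c, d) (c, d).
  exists [::]; split => //.
  have fT : forall s : seq nat, [seq x <- s | x \notin [::]] = s.
    by move=> s; apply/all_filterP/allP.
  have fF : forall s : seq nat, [seq x <- s | x \in [::]] = [::].
    by elim=> //=.
  rewrite /moveM /= !fT !fF !cats0 !(sorted_sort geq_trans') //; exact: sd_geq.
split; [split; [exact: SZ | split; [exact: SZ' | split; [by rewrite dZ dL GRing.subrr | by rewrite eM]]] |].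
by split; split.
Qed.
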